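(* Every non-zero element of $\mathbb{C}^{\mathbb{Z}}_{\mathrm{fin}}$ is generic.
   Context: $\mathbb{Z}$ acts on $\mathbb{C}^{\mathbb{Z}}$ by $n\cdot(a_i)_{i\in\mathbb{Z}}=(a_{i+n})_{i\in\mathbb{Z}}$; the elements $n\cdot\mathbf{a}$ are the $\mathbb{Z}$-translates of $\mathbf{a}$. $\mathbb{C}^{\mathbb{Z}}_{\mathrm{fin}}$ is the subspace of $\mathbb{C}^{\mathbb{Z}}$ of sequences with only finitely many non-zero entries. An element $\mathbf{a}\in\mathbb{C}^{\mathbb{Z}}$ is generic if the multiset of all its $\mathbb{Z}$-translates is linearly independent. *)

(* Defs.v *)
From HB Require Import structures.
From mathcomp Require Import all_boot all_order all_algebra.
From mathcomp Require Import complex.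
From mathcomp Require Import Rstruct.
Set Implicit Arguments. Unset Strict Implicit. Unset Printing Implicit Defensive.
Import Order.TTheory GRing.Theory Num.Theory.
Local Open Scope ring_scope.

Definition C : fieldType := complex Rdefinitions.R.

Definition seqZ := int -> C.

Definition ztranslate (n : int) (a : seqZ) : seqZ := fun i => a (i + n).

Definition fin_supp (a : seqZ) : Prop :=
  exists s : seq int, forall i, a i != 0 -> i \in s.

(* Linear independence in C^Z of a family (v n)_{n in Z} indexed by Z
   (i.e. of the multiset of its members): every finite linear relation
   among distinct indices is trivial. *)
Definition lin_indep_family (v : int -> seqZ) : Prop :=
  forall (s : seq int) (c : int -> C), uniq s ->
    (forall i, \sum_(n <- s) c n * v n i = 0) ->
    forall n, n \in s -> c n = 0.

Definition generic (a : seqZ) : Prop :=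
  lin_indep_family (fun n => ztranslate n a).

(* Main.v *)
Require Import Defs.
From Stdlib Require Import Classical FunctionalExtensionality.
From mathcomp Require Import all_boot all_order all_algebra complex Rstruct.
Import Order.TTheory GRing.Theory Num.Theory.
Local Open Scope ring_scope.

Lemma seq_min_int (t : seq int) x : x \in t ->
  exists2 m, m \in t & forall y, y \in t -> m <= y.
Proof.
elim: t x => [//|h t IH] x _.
case: t IH => [|h' t'] IH.
  by exists h; rewrite ?mem_head // => y; rewrite inE => /eqP ->.
have [m mt mmin] := IH h' (mem_head _ _).
case: (lerP h m) => hm.
  exists h; first exact: mem_head.
  move=> y; rewrite inE => /orP [/eqP -> //|yt]; exact: le_trans hm (mmin _ yt).
exists m; first by rewrite inE mt orbT.
move=> y; rewrite inE => /orP [/eqP ->|yt]; [exact: ltW | exact: mmin].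
Qed.

Lemma seq_max_int (t : seq int) x : x \in t ->
  exists2 m, m \in t & forall y, y \in t -> y <= m.
Proof.
move=> xt.
have [m mt mmin] := seq_min_int _ _ (map_f (fun z : int => - z) xt).
move/mapP: mt => [M Mt mE]; rewrite mE in mmin.
exists M => // y yt.
by have := mmin _ (map_f (fun z : int => - z) yt); rewrite lerN2.
Qed.

Lemma sum0 (R : fieldType) (I : eqType) (r : seq I) (P : pred I) (F : I -> R) :
  (forall i, P i -> F i = 0) -> \sum_(i <- r | P i) F i = 0.
Proof. by move=> h; apply: big1. Qed.

Theorem lemma2p2 (a : seqZ) : fin_supp a -> a <> (fun _ => 0) -> generic a.
Proof.
move=> [s0 Hs0] anz.
have [j aj] : exists j, a j != 0.
  apply: NNPP => Hall; apply: anz.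
  apply: functional_extensionality => i; apply/eqP.
  by case: (eqVneq (a i) 0) => // ai; exfalso; apply: Hall; exists i.
have jt : j \in [seq i <- s0 | a i != 0] by rewrite mem_filter aj Hs0.
have [m mt mmin] := seq_min_int _ _ jt.
move: mt; rewrite mem_filter => /andP [am _].
have below : forall i, i < m -> a i = 0.
  move=> i im; apply/eqP; case: (eqVneq (a i) 0) => // ai.
  have := mmin i; rewrite mem_filter ai Hs0 // => /(_ isT).
  by rewrite leNgt im.
move=> s c us H n ns.
case: (eqVneq (c n) 0) => // cn; exfalso.
have nt : n \in [seq k <- s | c k != 0] by rewrite mem_filter cn ns.
have [N Nt Nmax] := seq_max_int _ _ nt.
move: Nt; rewrite mem_filter => /andP [cN Ns].
have := H (m - N).
rewrite (bigD1_seq N) //= big_seq_cond.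
rewrite sum0.
  rewrite addr0 /ztranslate subrK => /eqP; rewrite mulf_eq0 (negbTE cN) /=.
  by rewrite (negbTE am).
move=> k /andP [ks kN].
case: (eqVneq (c k) 0) => [->|ck]; first by rewrite mul0r.
have := Nmax k; rewrite mem_filter ck ks => /(_ isT) kle.
have klt : k < N by rewrite lt_neqAle kN kle.
rewrite /ztranslate below ?mulr0 //.
by rewrite addrAC ltrBlDr ltrD2l.
Qed.
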